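(* In the setting described in the context, fix $\vartheta\in(0,\infty)$, write $\mathrm{range}(f')=(a,b)$ and let $g:(a,b)\to(0,\infty)$ be the inverse of $f'$; for $c\in\mathbb{R}$ put $I_c=\{\vartheta^{-1}y+c: y\in(a,b)\}$. If $f'(x)\to\infty$ as $x\to\infty$ and, for every $c\in\mathbb{R}$, the random variable $g\bigl(\vartheta(\ell(T,\cdot)-c)\bigr)\mathbf{1}_{\{\ell(T,\cdot)\in I_c\}}$ is $\mathsf{P}$-integrable, then there exist a constant $c\in\mathbb{R}$ and a function $z:\mathbb{R}\to\mathbb{R}_+$ such that $x-f'(z(x))/\vartheta=c$ for $x\in I_c$, $z(x)=0$ for $x\notin I_c$, $\mathsf{E}\bigl(z(\ell(T,\cdot))\bigr)=1$ and $\mathsf{P}\bigl(\ell(T,\cdot)<\sup I_c\bigr)=1$.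
   Context: Fix $T\in(0,\infty)$, $d\in\mathbb{N}$, let $\Omega=D([0,T],\mathbb{R}^d)$ be the set of càdlàg paths with canonical process $X(t)(\omega)=\omega(t)$ and natural filtration $(\mathcal{F}^0_t)$. $\mathsf{P}$ is a probability measure on $(\Omega,\mathcal{F}^0_T)$ with $\mathsf{P}(X(0)=0)=1$; $\mathsf{E}$ denotes $\mathsf{P}$-expectation. $f:\mathbb{R}_+\to\mathbb{R}$ is twice differentiable and strictly convex with $f(1)=0$, so $f'$ is continuous strictly increasing on $(0,\infty)$ and its range is an open interval $(a,b)$ ($a,b$ possibly infinite). $\ell:[0,T]\times\Omega\to\mathbb{R}$ is a non-anticipative functional (measurable with $\ell(t,\omega)=\ell(t,\omega(t\wedge\cdot))$) with $\ell(0,0)=0$; $\ell(T,\cdot)$ is the terminal loss. *)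

(* Defs.v *)
From HB Require Import structures.
From mathcomp Require Import all_boot all_order all_algebra.
From mathcomp Require Import all_classical all_reals all_analysis.
Set Implicit Arguments. Unset Strict Implicit. Unset Printing Implicit Defensive.
Import Order.TTheory GRing.Theory Num.Theory.
Import numFieldNormedType.Exports.
Local Open Scope classical_set_scope.
Local Open Scope ring_scope.

(* Càdlàg paths w : [0,T] -> R^d, represented as functions R -> 'rV[R]_d
   that are extended constantly outside [0,T] (w t = w (clamp t)), so that
   each element of D([0,T],R^d) has exactly one representative. *)
Definition cadlag (R : realType) (T : R) (d : nat) (w : R -> 'rV[R]_d) : Prop :=
  [/\ (forall t, w t = w (Num.min (Num.max t 0) T)),
      (forall t, 0 <= t < T -> w x @[x --> t^'+] --> w t) &
      (forall t, 0 < t <= T -> exists l : 'rV[R]_d, w x @[x --> t^'-] --> l)].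

Record cadlag_path (R : realType) (T : R) (d : nat) := CadlagPath {
  path_val :> R -> 'rV[R]_d;
  path_cadlag : cadlag T path_val }.

HB.instance Definition _ (R : realType) (T : R) (d : nat) :=
  gen_eqMixin (cadlag_path T d).
HB.instance Definition _ (R : realType) (T : R) (d : nat) :=
  gen_choiceMixin (cadlag_path T d).

Lemma cadlag0 (R : realType) (T : R) (d : nat) : cadlag T (fun _ => (0 : 'rV[R]_d)).
Proof.
split => //; first by move=> t _; exact: cvg_cst.
by move=> t _; exists 0; exact: cvg_cst.
Qed.

Definition zero_path (R : realType) (T : R) (d : nat) : cadlag_path T d :=
  CadlagPath (cadlag0 T d).

HB.instance Definition _ (R : realType) (T : R) (d : nat) :=
  isPointed.Build (cadlag_path T d) (zero_path T d).

(* Generators of F^0_T: preimages of Borel sets under the coordinates of the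
   canonical process X(t), 0 <= t <= T. *)
Definition coord_sets (R : realType) (T : R) (d : nat) : set (set (cadlag_path T d)) :=
  [set A | exists t : R, 0 <= t <= T /\ exists i : 'I_d, exists B : set R,
     measurable B /\ A = [set w : cadlag_path T d | B (path_val w t ord0 i)]].

Definition Omega (R : realType) (T : R) (d : nat) := g_sigma_algebraType (@coord_sets R T d).

Definition non_anticipative (R : realType) (T : R) (d : nat)
  (ell : R -> Omega T d -> R) : Prop :=
  measurable_fun (`[0, T] `*` setT) (fun p : R * Omega T d => ell p.1 p.2) /\
  forall t, 0 <= t <= T -> forall w w' : Omega T d,
    (forall s, 0 <= s <= t -> path_val w s = path_val w' s) -> ell t w = ell t w'.

Definition Ic (R : realType) (a b : \bar R) (theta c : R) : set R :=
  [set x | exists y : R, (a < y%:E < b)%E /\ x = y / theta + c].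

(* Main.v *)
Require Import Defs.
From HB Require Import structures.
From mathcomp Require Import all_boot all_order all_algebra.
From mathcomp Require Import all_classical all_reals all_analysis.
From mathcomp Require Import measurable_realfun.
From mathcomp Require Import ring lra.
Import Order.TTheory GRing.Theory Num.Theory.
Import numFieldNormedType.Exports.
Local Open Scope classical_set_scope.
Local Open Scope ring_scope.

Section aux.
Variable R : realType.

Lemma near0_ball (P : R -> Prop) : (\forall h \near 0^', P h) ->
  exists2 d : R, 0 < d & forall h, h != 0 -> `|h| < d -> P h.
Proof.
rewrite near_withinE => /nbhs_ballP[d d0 H]; exists d => // h h0 hd.
apply: H => //; rewrite /ball /= sub0r normrN //.
Qed.

Lemma lim_le_right (q : R -> R) l s d0 : q h @[h --> 0^'] --> l -> 0 < d0 ->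
  (forall h, 0 < h < d0 -> q h <= s) -> l <= s.
Proof.
move=> cv d00 H; rewrite leNgt; apply/negP => ls.
have e0 : 0 < l - s by rewrite subr_gt0.
have /cvgrPdist_lt/(_ _ e0) := cv.
move=> /near0_ball[d dd Hd].
pose h := Num.min d d0 / 2.
have m0 : 0 < Num.min d d0 by rewrite lt_min dd d00.
have h0 : 0 < h by rewrite divr_gt0.
have hm : h < Num.min d d0 by rewrite /h ltr_pdivrMr // ltr_pMr // ltr1n.
have hd : h < d by apply: (lt_le_trans hm); rewrite ge_min lexx.
have hd0 : h < d0 by apply: (lt_le_trans hm); rewrite ge_min lexx orbT.
have := Hd h (lt0r_neq0 h0) ltac:(by rewrite gtr0_norm).
have qs := H h ltac:(by rewrite h0 hd0).
rewrite ltr_distlC => /andP[h1 _].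
lra.
Qed.

Lemma lim_ge_left (q : R -> R) l s d0 : q h @[h --> 0^'] --> l -> 0 < d0 ->
  (forall h, - d0 < h < 0 -> s <= q h) -> s <= l.
Proof.
move=> cv d00 H; rewrite leNgt; apply/negP => ls.
have e0 : 0 < s - l by rewrite subr_gt0.
have /cvgrPdist_lt/(_ _ e0) := cv.
move=> /near0_ball[d dd Hd].
pose h := Num.min d d0 / 2.
have m0 : 0 < Num.min d d0 by rewrite lt_min dd d00.
have h0 : 0 < h by rewrite divr_gt0.
have hm : h < Num.min d d0 by rewrite /h ltr_pdivrMr // ltr_pMr // ltr1n.
have hd : h < d by apply: (lt_le_trans hm); rewrite ge_min lexx.
have hd0 : h < d0 by apply: (lt_le_trans hm); rewrite ge_min lexx orbT.
have := Hd (- h) ltac:(by rewrite oppr_eq0 lt0r_neq0) ltac:(by rewrite normrN gtr0_norm).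
have qs := H (- h) ltac:(by rewrite ltrN2 hd0 oppr_lt0 h0).
rewrite ltr_distlC => /andP[_ h1].
lra.
Qed.

Variable f : R -> R.
Hypothesis conv : forall x y t, 0 <= x -> 0 <= y -> 0 < t < 1 ->
  f (t * x + (1 - t) * y) <= t * f x + (1 - t) * f y.

Lemma dq_cvg x : derivable f x 1 ->
  (fun h => h^-1 * (f (h + x) - f x)) h @[h --> 0^'] --> derive1 f x.
Proof.
move=> df; rewrite derive1E.
suff -> : (fun h => h^-1 * (f (h + x) - f x)) =
  (fun h => h^-1 *: ((f \o shift x) (h *: 1) - f x)) by exact: df.
by apply/funext => h /=; rewrite [h *: 1]mulr1.
Qed.

Lemma deriv_le_slope x z : 0 < x -> x < z -> derivable f x 1 ->
  derive1 f x <= (f z - f x) / (z - x).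
Proof.
move=> x0 xz df; have zx : 0 < z - x by rewrite subr_gt0.
apply: (@lim_le_right (fun h => h^-1 * (f (h + x) - f x)) _ _ _ _ zx); first exact: dq_cvg.
move=> h /andP[h0 hz].
pose t := h / (z - x).
have t0 : 0 < t by rewrite divr_gt0.
have t1 : t < 1 by rewrite /t ltr_pdivrMr // mul1r.
have := conv z x t ltac:(lra) ltac:(lra) ltac:(by rewrite t0 t1).
have -> : t * z + (1 - t) * x = h + x by rewrite /t; field; rewrite lt0r_neq0.
move=> c.
rewrite mulrC ler_pdivrMr //.
have -> : (f z - f x) / (z - x) * h = t * (f z - f x) by rewrite /t; field; rewrite lt0r_neq0.
have -> : t * (f z - f x) = t * f z + (1 - t) * f x - f x by ring.
lra.
Qed.

Lemma slope_le_deriv x y : 0 <= x -> x < y -> derivable f y 1 ->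
  (f y - f x) / (y - x) <= derive1 f y.
Proof.
move=> x0 xy df; have yx : 0 < y - x by rewrite subr_gt0.
apply: (@lim_ge_left (fun h => h^-1 * (f (h + y) - f y)) _ _ _ _ yx); first exact: dq_cvg.
move=> h /andP[hl h0].
pose t := (y + h - x) / (y - x).
have t0 : 0 < t by rewrite divr_gt0 //; lra.
have t1 : t < 1 by rewrite /t ltr_pdivrMr // mul1r; lra.
have := conv y x t ltac:(lra) ltac:(lra) ltac:(by rewrite t0 t1).
have -> : t * y + (1 - t) * x = h + y by rewrite /t; field; rewrite lt0r_neq0.
move=> c.
have hN : 0 < - h by lra.
have -> : h^-1 * (f (h + y) - f y) = (f y - f (h + y)) / (- h).
  by field; apply/negP => /eqP e; lra.
rewrite ler_pdivlMr // mulrC.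
have -> : - h * ((f y - f x) / (y - x)) = (1 - t) * (f y - f x) by rewrite /t; field; rewrite lt0r_neq0.
have -> : (1 - t) * (f y - f x) = f y - (t * f y + (1 - t) * f x) by ring.
lra.
Qed.

Hypothesis sconv : forall x y t, 0 <= x -> 0 <= y -> x != y -> 0 < t < 1 ->
     f (t * x + (1 - t) * y) < t * f x + (1 - t) * f y.

Lemma deriv_lt x y : 0 < x -> x < y -> derivable f x 1 -> derivable f y 1 ->
  derive1 f x < derive1 f y.
Proof.
move=> x0 xy dx dy.
pose m := (x + y) / 2.
have xm : x < m by rewrite /m; lra.
have my : m < y by rewrite /m; lra.
have h1 := @deriv_le_slope x m x0 xm dx.
have h2 := @slope_le_deriv m y ltac:(rewrite /m; lra) my dy.
have h3 := sconv x y (1/2) ltac:(lra) ltac:(lra)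
   ltac:(by rewrite lt_eqF) ltac:(lra).
have em : 1 / 2 * x + (1 - 1 / 2) * y = m by rewrite /m; field.
rewrite em in h3.
have e1 : m - x = (y - x) / 2 by rewrite /m; field.
have e2 : y - m = (y - x) / 2 by rewrite /m; field.
rewrite e1 in h1; rewrite e2 in h2.
have k0 : 0 < (y - x) / 2 by rewrite divr_gt0 // subr_gt0.
have : (f m - f x) / ((y - x) / 2) < (f y - f m) / ((y - x) / 2).
  rewrite ltr_pM2r ?invr_gt0 //; lra.
lra.
Qed.
End aux.

Lemma cvge_ge (R : realType) (u : nat -> \bar R) l x :
  u n @[n --> \oo] --> l -> (forall n, x <= u n)%E -> (x <= l)%E.
Proof.
move=> cv h; rewrite -(cvg_lim (@ereal_hausdorff R) cv).
by apply: lime_ge; [exact: cvgP cv | exact: nearW].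
Qed.

Lemma cvge_le (R : realType) (u : nat -> \bar R) l x :
  u n @[n --> \oo] --> l -> (forall n, u n <= x)%E -> (l <= x)%E.
Proof.
move=> cv h; rewrite -(cvg_lim (@ereal_hausdorff R) cv).
by apply: lime_le; [exact: cvgP cv | exact: nearW].
Qed.

Section Gsec.
Variables (R : realType) (f : R -> R) (a b : \bar R) (g : R -> R) (theta : R).
Hypothesis der : forall x, 0 < x -> derivable f x 1.
Hypothesis sconv : forall x y t, 0 <= x -> 0 <= y -> x != y -> 0 < t < 1 ->
     f (t * x + (1 - t) * y) < t * f x + (1 - t) * f y.
Hypothesis img : (derive1 f) @` `]0, +oo[ = [set y : R | (a < y%:E < b)%E].
Hypothesis th0 : 0 < theta.
Hypothesis ginv : forall y, (a < y%:E < b)%E -> 0 < g y /\ (derive1 f) (g y) = y.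
Hypothesis finf : (derive1 f) x @[x --> +oo] --> +oo.

Local Notation fp := (derive1 f).

Lemma conv_w x y t : 0 <= x -> 0 <= y -> 0 < t < 1 ->
  f (t * x + (1 - t) * y) <= t * f x + (1 - t) * f y.
Proof.
move=> x0 y0 t01; case: (eqVneq x y) => [<-|nxy]; last exact/ltW/sconv.
have -> : t * x + (1 - t) * x = x by ring.
have -> : t * f x + (1 - t) * f x = f x by ring.
by [].
Qed.

Lemma fp_lt x y : 0 < x -> x < y -> fp x < fp y.
Proof.
move=> x0 xy; apply: (@deriv_lt R f conv_w sconv x y x0 xy (der _ x0)).
by apply: der; apply: lt_trans xy.
Qed.
Arguments fp_lt {_ _}.

Lemma fp_in x : 0 < x -> (a < (fp x)%:E < b)%E.
Proof.
move=> x0.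
have : [set y : R | (a < y%:E < b)%E] (fp x).
  by rewrite -img; exists x => //=; rewrite in_itv /= andbT.
by [].
Qed.
Arguments fp_in {_}.

Lemma g_fp x : 0 < x -> g (fp x) = x.
Proof.
move=> x0; have [g0 e] := ginv _ (fp_in x0).
case: (ltgtP (g (fp x)) x) => // h.
- by have := fp_lt g0 h; rewrite e ltxx.
- by have := fp_lt x0 h; rewrite e ltxx.
Qed.
Arguments g_fp {_}.

Lemma b_inf y : (y%:E < b)%E.
Proof.
have /cvgryPge/(_ (y + 1)) := finf.
case=> M [_ HM].
pose x := Num.max M 0 + 1.
have m1 : M <= Num.max M 0 by rewrite le_max lexx.
have m2 : 0 <= Num.max M 0 by rewrite le_max lexx orbT.
have xM : M < x by rewrite /x; lra.
have x0 : 0 < x by rewrite /x; lra.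
have := HM x xM; have /andP[_ hb] := fp_in x0 => hy.
apply: le_lt_trans hb; rewrite lee_fin; lra.
Qed.

Lemma Ic_iff c x : Ic a b theta c x <-> (a < (theta * (x - c))%:E)%E.
Proof.
split.
- case=> y [/andP[ay _] ->].
  have -> : theta * (y / theta + c - c) = y by field; rewrite gt_eqF.
  exact: ay.
- move=> h; exists (theta * (x - c)); split; first by rewrite h b_inf.
  by field; rewrite gt_eqF.
Qed.

Definition G y := if (a < y%:E)%E then g y else 0.

Lemma G_ge0 y : 0 <= G y.
Proof.
rewrite /G; case: ifP => ay //.
by have [/ltW + _] := ginv y ltac:(by rewrite ay b_inf).
Qed.

Lemma g_mono y1 y2 : (a < y1%:E)%E -> y1 <= y2 -> g y1 <= g y2.
Proof.
move=> a1 le12.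
have a2 : (a < y2%:E)%E by apply: (lt_le_trans a1); rewrite lee_fin.
have [g10 e1] := ginv y1 ltac:(by rewrite a1 b_inf).
have [g20 e2] := ginv y2 ltac:(by rewrite a2 b_inf).
rewrite leNgt; apply/negP => h.
have := fp_lt g20 h; rewrite e1 e2 => h'.
by move: le12; rewrite leNgt h'.
Qed.
Arguments g_mono {_ _}.

Lemma G_mono y1 y2 : y1 <= y2 -> G y1 <= G y2.
Proof.
move=> le12; rewrite {1}/G; case: ifP => a1; last exact: G_ge0.
have a2 : (a < y2%:E)%E by apply: (lt_le_trans a1); rewrite lee_fin.
by rewrite /G a2; exact: g_mono.
Qed.
Arguments G_mono {_ _}.

Lemma G_fp x : 0 < x -> G (fp x) = x.
Proof. by move=> x0; rewrite /G; have /andP[-> _] := fp_in x0; exact: g_fp. Qed.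
Arguments G_fp {_}.

Lemma G_small e y : 0 < e -> y <= fp e -> G y <= e.
Proof. by move=> e0 ye; rewrite -[X in _ <= X](G_fp e0); exact: G_mono. Qed.
Arguments G_small {_ _}.

Lemma G_cont : continuous G.
Proof.
move=> y0; apply/cvgrPdist_lt => e e0.
suff [dl dl0 Hd] : exists2 dl : R, 0 < dl & forall y, `|y0 - y| < dl -> `|G y0 - G y| < e.
  by apply/nbhs_ballP; exists dl => // y /= /Hd.
case: (boolP (a < y0%:E)%E) => a1.
- have [x00 e00] := ginv y0 ltac:(by rewrite a1 b_inf).
  set x0 := g y0 in x00 e00.
  pose e' := Num.min (e / 2) (x0 / 2).
  have e'1 : e' <= e / 2 by rewrite /e' ge_min lexx.
  have e'2 : e' <= x0 / 2 by rewrite /e' ge_min lexx orbT.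
  have e'0 : 0 < e' by rewrite /e' lt_min !divr_gt0.
  have y1l : fp (x0 - e') < y0 by rewrite -e00; apply: fp_lt; lra.
  have y2l : y0 < fp (x0 + e') by rewrite -{1}e00; apply: fp_lt; lra.
  have ay1 : (a < (fp (x0 - e'))%:E)%E by have /andP[] := fp_in (x := x0 - e') ltac:(lra).
  exists (Num.min (y0 - fp (x0 - e')) (fp (x0 + e') - y0)).
    by rewrite lt_min !subr_gt0 y1l y2l.
  move=> y; rewrite lt_min => /andP[h1 h2].
  move: h1 h2; rewrite !ltr_distlC => /andP[l1 _] /andP[_ l2].
  have hy1 : fp (x0 - e') < y by lra.
  have hy2 : y < fp (x0 + e') by lra.
  have ay : (a < y%:E)%E by apply: (lt_trans ay1); rewrite lte_fin.
  rewrite /G a1 ay.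
  have := g_mono ay1 (ltW hy1); rewrite g_fp; last lra.
  have := g_mono ay (ltW hy2); rewrite g_fp; last lra.
  move=> u1 u2.
  rewrite -/x0; lra.
- have ya : (y0%:E <= a)%E by rewrite leNgt.
  have e20 : 0 < e / 2 by rewrite divr_gt0.
  have ay2 : (a < (fp (e / 2))%:E)%E by have /andP[] := fp_in e20.
  have y02 : y0 < fp (e / 2) by rewrite -lte_fin; apply: le_lt_trans ya ay2.
  exists (fp (e / 2) - y0); first by rewrite subr_gt0.
  move=> y; rewrite ltr_distlC => /andP[_ h].
  have hy : y <= fp (e / 2) by lra.
  have := G_small e20 hy; have := G_ge0 y.
  rewrite /G (negbTE a1) -/(G y) sub0r normrN => u1 u2.
  rewrite ger0_norm //; lra.
Qed.

Variables (d : nat) (T : R) (P : probability (Omega T d) R) (ell : R -> Omega T d -> R).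
Hypothesis hint : forall c : R, P.-integrable setT
     (fun w => (g (theta * (ell T w - c)) * \1_(Ic a b theta c) (ell T w))%:E).

Definition F c w := (G (theta * (ell T w - c)))%:E.

Lemma F_eq c : (fun w => (g (theta * (ell T w - c)) * \1_(Ic a b theta c) (ell T w))%:E) = F c.
Proof.
apply/funext => w; rewrite indicE /F /G.
case: (boolP (a < (theta * (ell T w - c))%:E)%E) => h.
- by rewrite mem_set ?mulr1 //; apply/Ic_iff.
- by rewrite memNset ?mulr0 // => /Ic_iff; apply/negP.
Qed.

Lemma F_int c : P.-integrable setT (F c).
Proof. by rewrite -F_eq. Qed.

Lemma F_mes c : measurable_fun setT (fun w => F c w).
Proof. exact: measurable_int (F_int c). Qed.

Lemma F_ge0 c w : (0 <= F c w)%E.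
Proof. by rewrite lee_fin G_ge0. Qed.

Definition H c := (\int[P]_w F c w)%E.

Lemma F_anti c1 c2 w : c1 <= c2 -> (F c2 w <= F c1 w)%E.
Proof.
move=> le; rewrite lee_fin; apply: G_mono.
by rewrite ler_pM2l //; lra.
Qed.

Lemma H_anti c1 c2 : c1 <= c2 -> (H c2 <= H c1)%E.
Proof.
move=> le; apply: ge0_le_integral => //.
- by move=> w _; apply: F_ge0.
- exact: F_mes.
- exact: F_mes.
- by move=> w _; apply: F_anti.
Qed.
Arguments H_anti {_ _}.

Lemma DC (cn : nat -> R) (dd : R) (Lw : Omega T d -> R) :
  (forall n, dd <= cn n) ->
  (forall w, G (theta * (ell T w - cn n)) @[n --> \oo] --> Lw w) ->
  measurable_fun setT (fun w => (Lw w)%:E) ->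
  H (cn n) @[n --> \oo] --> (\int[P]_w (Lw w)%:E)%E.
Proof.
move=> cnd cv mL.
have [_ _ ] := @dominated_convergence _ _ _ P setT measurableT
  (fun n => F (cn n)) (fun w => (Lw w)%:E) (F dd) (fun n => F_mes (cn n)) mL
  ltac:(apply: aeW => w _; apply/fine_cvgP; split; [exact: nearW | exact: cv w])
  (F_int dd)
  ltac:(apply: aeW => w n _; rewrite gee0_abs ?F_ge0 //; exact: F_anti).
by [].
Qed.

Lemma H_big : exists c, (1 <= H c)%E.
Proof.
have mono : forall w, setT w -> {homo (fun n => F (- n%:R) w) : n m / (n <= m)%N >-> (n <= m)%E}.
  move=> w _ n m nm /=; apply: F_anti.
  by rewrite lerN2 ler_nat.
have := @cvg_monotone_convergence _ _ _ P setT measurableT (fun n => F (- n%:R))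
  (fun n => F_mes _) (fun n w _ => F_ge0 _ _) mono.
have lim_inf : forall w, limn (fun n => F (- n%:R) w) = +oo%E.
  move=> w; apply: cvg_lim => //; apply/cvgeryP/cvgryPge => A.
  pose A' := Num.max A 1.
  have A'0 : 0 < A' by rewrite /A' lt_max ltr01 orbT.
  have AA : A <= A' by rewrite /A' le_max lexx.
  near=> n.
  apply: (le_trans AA); rewrite -[X in X <= _](G_fp A'0); apply: G_mono.
  rewrite -ler_pdivrMl //.
  have : fp A' / theta - ell T w <= n%:R by near: n; exact: nbhs_infty_ger.
  lra.
have -> : (fun w => limn (fun n => F (- n%:R) w)) = cst +oo%E.
  by apply/funext => w; rewrite lim_inf.
rewrite integral_cst //.
rewrite [X in (+oo * X)%E](_ : _ = 1%E); last exact: probability_setT.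
rewrite mule1.
move=> /cvgeyPge /(_ 1) [N _ HN].
by exists (- N%:R); apply: (HN N) => /=.
Unshelve. all: by end_near.
Qed.

Lemma H_small : exists c, (H c < 1)%E.
Proof.
have pw : forall w, G (theta * (ell T w - n%:R)) @[n --> \oo] --> (fun _ => 0 : R) w.
  move=> w; apply/cvgrPdist_lt => e e0 /=.
  have e20 : 0 < e / 2 by rewrite divr_gt0.
  near=> n.
  rewrite sub0r normrN ger0_norm ?G_ge0 //.
  apply: (le_lt_trans (G_small e20 _)); last lra.
  have hn : ell T w - fp (e / 2) / theta <= n%:R by near: n; exact: nbhs_infty_ger.
  have -> : fp (e / 2) = theta * (fp (e / 2) / theta) by field; rewrite gt_eqF.
  rewrite ler_pM2l //; lra.
have cv := @DC (fun n => n%:R) 0 (fun _ => 0) (fun n => ler0n _ _) pw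
  ltac:(exact: measurable_cst).
have e0 : (\int[P]_w ((fun _ : Omega T d => 0 : R) w)%:E)%E = 0%E by exact: integral0.
rewrite e0 in cv.
apply: contrapT => nH.
have all1 : forall n : nat, (1 <= H n%:R)%E.
  by move=> n; rewrite leNgt; apply/negP => h; apply: nH; exists n%:R.
by have := @cvge_ge R _ _ _ cv all1; rewrite lee_fin ler10.
Unshelve. all: by end_near.
Qed.

Lemma main_ex : exists c : R, exists z : R -> R,
    (forall x, 0 <= z x) /\
    (forall x, Ic a b theta c x -> x - (derive1 f) (z x) / theta = c) /\
    (forall x, ~ Ic a b theta c x -> z x = 0) /\
    measurable_fun setT z /\
    (\int[P]_w (z (ell T w))%:E = 1)%E /\
    P [set w | ((ell T w)%:E < ereal_sup (EFin @` Ic a b theta c))%E] = 1%E.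
Proof.
have [c0 Hc0] := H_big.
have [c1 Hc1] := H_small.
pose S := [set c | (1 <= H c)%E].
have ubS : ubound S c1.
  move=> c Sc; rewrite leNgt; apply/negP => h.
  by have := le_lt_trans (le_trans Sc (H_anti (ltW h))) Hc1; rewrite ltxx.
have hs : has_sup S by split; [exists c0 | exists c1].
pose cs := sup S.
have left' : forall n, (1 <= H (cs + -1 * harmonic n))%E.
  move=> n; have [s Ss hs'] := sup_adherent (harmonic_gt0 n) hs.
  apply: (le_trans Ss); apply: H_anti; rewrite mulN1r; exact: ltW.
have right' : forall n, (H (cs + 1 * harmonic n) <= 1)%E.
  move=> n.
  have nS : ~ S (cs + 1 * harmonic n).
    move=> Sc; have := @ub_le_sup R S hs.2 _ Sc.
    have := harmonic_gt0 (R := R) n; rewrite -/cs; lra.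
  by apply/ltW; rewrite ltNge; apply/negP => h; apply: nS h.
have hpw : forall (sg : R) w, G (theta * (ell T w - (cs + sg * harmonic n))) @[n --> \oo]
     --> G (theta * (ell T w - cs)).
  move=> sg w.
  have : (theta * (ell T w - (cs + sg * harmonic n))) @[n --> \oo] --> theta * (ell T w - (cs + sg * 0)).
    apply: cvgM; first exact: cvg_cst.
    apply: cvgB; first exact: cvg_cst.
    apply: cvgD; first exact: cvg_cst.
    apply: cvgM; [exact: cvg_cst | exact: cvg_harmonic].
  rewrite mulr0 addr0 => cv.
  exact: (continuous_cvg _ (G_cont _) cv).
have h1 : forall n, harmonic n <= 1 :> R.
  by move=> n; rewrite /harmonic /= invf_le1 // ?ler1n // ltr0n.
have cvL := @DC (fun n => cs + -1 * harmonic n) (cs - 1) (fun w => G (theta * (ell T w - cs)))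
  ltac:(move=> n; have := h1 n; lra) (hpw (-1)) (F_mes cs).
have cvR := @DC (fun n => cs + 1 * harmonic n) cs (fun w => G (theta * (ell T w - cs)))
  ltac:(move=> n; have := harmonic_ge0 (R := R) n; lra) (hpw 1) (F_mes cs).
have HL : (1 <= H cs)%E := @cvge_ge R _ _ _ cvL left'.
have HR : (H cs <= 1)%E := @cvge_le R _ _ _ cvR right'.
have Hcs : H cs = 1%E by apply/le_anti; rewrite HL HR.
exists cs, (fun x => G (theta * (x - cs))).
split; first by move=> x; exact: G_ge0.
split.
  move=> x /Ic_iff ax; rewrite /G ax.
  have [_ ->] := ginv _ (ltac:(by rewrite ax b_inf) : (a < (theta * (x - cs))%:E < b)%E).
  by field; rewrite gt_eqF.
split.
  move=> x nI; rewrite /G; case: ifP => // ax.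
  by exfalso; apply: nI; apply/Ic_iff; rewrite ax.
split.
  have hc : continuous (G \o (fun x => theta * (x - cs))).
    move=> x; apply: continuous_comp; last exact: G_cont.
    apply: cvgM; first exact: cvg_cst.
    apply: cvgB; [exact: cvg_id | exact: cvg_cst].
  exact: continuous_measurable_fun hc.
split; first exact: Hcs.
have -> : ereal_sup (EFin @` Ic a b theta cs) = +oo%E.
  have xI : forall M, Ic a b theta cs (Num.max (M + 1) (cs + fp 1 / theta + 1)).
    move=> M; apply/Ic_iff.
    have /andP[a1 _] := fp_in (ltr01 : (0 : R) < 1).
    apply: (lt_trans a1); rewrite lte_fin.
    have hm : cs + fp 1 / theta + 1 <= Num.max (M + 1) (cs + fp 1 / theta + 1).
      by rewrite le_max lexx orbT.
    have e1 : fp 1 = theta * (fp 1 / theta) by field; rewrite gt_eqF.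
    rewrite [X in X < _]e1 ltr_pM2l //; lra.
  apply: hasNub_ereal_sup; last by exists (Num.max (0 + 1) (cs + fp 1 / theta + 1)); exact: xI.
  case=> M HM; have := HM _ (xI M).
  have : M + 1 <= Num.max (M + 1) (cs + fp 1 / theta + 1) by rewrite le_max lexx.
  lra.
have -> : [set w | ((ell T w)%:E < +oo)%E] = setT.
  by apply/seteqP; split => // w _; exact: ltry.
exact: probability_setT.
Qed.

End Gsec.

Theorem proposition4p5 (R : realType) (T : R) (d : nat)
  (P : probability (Omega T d) R)
  (f : R -> R) (ell : R -> Omega T d -> R) (theta : R)
  (a b : \bar R) (g : R -> R) :
  0 < T ->
  (* P(X(0) = 0) = 1 *)
  P [set w : Omega T d | path_val w 0 = 0] = 1%E ->
  (* f : R_+ -> R twice differentiable, strictly convex, f(1) = 0 *)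
  (forall x, 0 < x -> derivable f x 1 /\ derivable (derive1 f) x 1) ->
  (forall x y t, 0 <= x -> 0 <= y -> x != y -> 0 < t < 1 ->
     f (t * x + (1 - t) * y) < t * f x + (1 - t) * f y) ->
  f 1 = 0 ->
  (* range(f') = (a, b) *)
  (derive1 f) @` `]0, +oo[ = [set y : R | (a < y%:E < b)%E] ->
  (* l is a non-anticipative functional with l(0, 0) = 0 *)
  non_anticipative ell ->
  ell 0 (zero_path T d) = 0 ->
  0 < theta ->
  (* g : (a,b) -> (0,oo) is the inverse of f' *)
  (forall y, (a < y%:E < b)%E -> 0 < g y /\ (derive1 f) (g y) = y) ->
  (* f'(x) -> oo as x -> oo *)
  (derive1 f) x @[x --> +oo] --> +oo ->
  (forall c : R, P.-integrable setT
     (fun w => (g (theta * (ell T w - c)) * \1_(Ic a b theta c) (ell T w))%:E)) ->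
  exists c : R, exists z : R -> R,
    (forall x, 0 <= z x) /\
    (forall x, Ic a b theta c x -> x - (derive1 f) (z x) / theta = c) /\
    (forall x, ~ Ic a b theta c x -> z x = 0) /\
    measurable_fun setT z /\
    (\int[P]_w (z (ell T w))%:E = 1)%E /\
    P [set w | ((ell T w)%:E < ereal_sup (EFin @` Ic a b theta c))%E] = 1%E.
Proof.
move=> _ _ hd hconv _ himg _ _ th0 hg hinf hint.
exact: (@main_ex R f a b g theta (fun x x0 => proj1 (hd x x0)) hconv himg th0 hg hinf d T P ell hint).
Qed.
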